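(* If an affine bijection $\sigma:\mathcal{G}_N\to\mathcal{G}_N$ satisfies $\sigma(A_0)=A_0$ and $\sigma(A_\mu)=A_\mu$ for all $\mu=1,\ldots,N$, then $\sigma$ is the identity.
   Context: $\mathcal{G}_N$ is the set of real symmetric positive semi-definite $N\times N$ matrices with unit diagonal. $A_0$ is the all-ones $N\times N$ matrix, and for $\mu=1,\ldots,N$, $A_\mu=\mathbf{s}\mathbf{s}^\top$ where $\mathbf{s}\in\{\pm1\}^N$ has $s_\mu=-1$ and all other entries $+1$. *)

(* Defs.v *)
From HB Require Import structures.
From mathcomp Require Import all_boot all_order all_algebra.
From mathcomp Require Import reals.
Set Implicit Arguments. Unset Strict Implicit. Unset Printing Implicit Defensive.
Import Order.TTheory GRing.Theory Num.Theory.
Local Open Scope ring_scope.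

Definition psd (R : realType) (N : nat) (A : 'M[R]_N) : Prop :=
  forall x : 'cV[R]_N, 0 <= (x^T *m A *m x) 0 0.

Definition elliptope (R : realType) (N : nat) (A : 'M[R]_N) : Prop :=
  [/\ A^T = A, psd A & forall i : 'I_N, A i i = 1].

Definition A0 (R : realType) (N : nat) : 'M[R]_N := const_mx 1.

Definition svec (R : realType) (N : nat) (mu : 'I_N) : 'cV[R]_N :=
  \col_j (if j == mu then -1 else 1).

Definition Amu (R : realType) (N : nat) (mu : 'I_N) : 'M[R]_N :=
  svec R mu *m (svec R mu)^T.

Definition affine_bijection_on (R : realType) (N : nat)
    (sigma : 'M[R]_N -> 'M[R]_N) : Prop :=
  [/\ (forall X, elliptope X -> elliptope (sigma X)),
      (forall X Y, elliptope X -> elliptope Y -> sigma X = sigma Y -> X = Y),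
      (forall Y, elliptope Y -> exists2 X, elliptope X & sigma X = Y)
    & (forall X Y (t : R), elliptope X -> elliptope Y -> 0 <= t <= 1 ->
         sigma (t *: X + (1 - t) *: Y) = t *: sigma X + (1 - t) *: sigma Y)].

(* Main.v *)
Require Import Defs.
From HB Require Import structures.
From mathcomp Require Import all_boot all_order all_algebra.
From mathcomp Require Import reals.
From mathcomp Require Import ring lra.
Set Implicit Arguments. Unset Strict Implicit. Unset Printing Implicit Defensive.
Import Order.TTheory GRing.Theory Num.Theory.
Local Open Scope ring_scope.


Section S.
Variable R : realType.
Variable N : nat.
Implicit Types (A X Y : 'M[R]_N) (x y v : 'cV[R]_N).

Definition bf A x y : R := (x^T *m A *m y) 0 0.
Definition ev (i : 'I_N) : 'cV[R]_N := delta_mx i 0.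

Lemma bfDl A x y z : bf A (x + y) z = bf A x z + bf A y z.
Proof. by rewrite /bf linearD /= !mulmxDl mxE. Qed.
Lemma bfDr A x y z : bf A z (x + y) = bf A z x + bf A z y.
Proof. by rewrite /bf !mulmxDr mxE. Qed.
Lemma bfZl A c x z : bf A (c *: x) z = c * bf A x z.
Proof. by rewrite /bf linearZ /= -!scalemxAl mxE. Qed.
Lemma bfZr A c x z : bf A z (c *: x) = c * bf A z x.
Proof. by rewrite /bf -!scalemxAr mxE. Qed.
Lemma bfE A i j : bf A (ev i) (ev j) = A i j.
Proof.
rewrite /bf /ev trmx_delta -rowE -colE !mxE //.
Qed.
Lemma bfsum A x y : bf A x y = \sum_a \sum_b x a 0 * A a b * y b 0.
Proof.
rewrite /bf mxE exchange_big /=; apply: eq_bigr => a _.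
rewrite mxE big_distrl /=.
by apply: eq_bigr => b _; rewrite !mxE.
Qed.

Lemma el_sym X : elliptope X -> forall i j, X j i = X i j.
Proof. by case=> hT _ _ i j; rewrite -{1}hT mxE. Qed.
Lemma el_psd X x : elliptope X -> 0 <= bf X x x.
Proof. by case=> _ hP _; apply: hP. Qed.
Lemma el_diag X i : elliptope X -> X i i = 1.
Proof. by case=> _ _ hd; apply: hd. Qed.

Lemma el_bound X i j : elliptope X -> -1 <= X i j <= 1.
Proof.
move=> hX.
have h1 := el_psd (ev i + ev j) hX.
have h2 := el_psd (ev i + (-1) *: ev j) hX.
move: h1 h2; rewrite !(bfDl, bfDr, bfZl, bfZr, bfE) !el_diag // (el_sym hX j i).
move=> h1 h2; apply/andP; split; lra.
Qed.

Lemma el_rows X i j k : elliptope X -> X i j = 1 -> X i k = X j k.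
Proof.
move=> hX hij.
have s1 := el_sym hX i j; have s2 := el_sym hX i k; have s3 := el_sym hX j k.
set d := X i k - X j k.
have h := el_psd (ev i + (-1) *: ev j + (- d) *: ev k) hX.
move: h; rewrite !(bfDl, bfDr, bfZl, bfZr, bfE) !el_diag //.
rewrite s1 s2 s3 hij -/d => h.
have hd : d ^+ 2 <= 0 by move: h; rewrite /d; nra.
have : d = 0 by nra.
by move/eqP; rewrite subr_eq0 => /eqP.
Qed.

Lemma el_comb X Y t : elliptope X -> elliptope Y -> 0 <= t <= 1 ->
  elliptope (t *: X + (1 - t) *: Y).
Proof.
move=> [hXT hXP hXd] [hYT hYP hYd] /andP[t0 t1]; split.
- by rewrite linearD !linearZ /= hXT hYT.
- move=> x; have := hXP x; have := hYP x.
  rewrite -/(bf X x x) -/(bf Y x x) -/(bf _ x x).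
  rewrite /bf mulmxDr mulmxDl -!scalemxAr -!scalemxAl !mxE => hy hx.
  apply: addr_ge0; apply: mulr_ge0 => //; lra.
- by move=> i; rewrite !mxE hXd hYd; lra.
Qed.

Lemma r1E v a b : (v *m v^T) a b = v a 0 * v b 0.
Proof. by rewrite mxE big_ord1 mxE. Qed.

Lemma bf_r1 v x y : bf (v *m v^T) x y = (x^T *m v) 0 0 * (v^T *m y) 0 0.
Proof. by rewrite /bf !mulmxA -(mulmxA (x^T *m v)) mxE big_ord1. Qed.

Lemma el_r1 v : (forall a, v a 0 ^+ 2 = 1) -> elliptope (v *m v^T).
Proof.
move=> hv; split.
- by rewrite trmx_mul trmxK.
- move=> x; rewrite -/(bf _ x x) bf_r1.
  have -> : (v^T *m x) = (x^T *m v)^T by rewrite trmx_mul trmxK.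
  by rewrite [X in _ * X]mxE -expr2 sqr_ge0.
- by move=> i; rewrite r1E -expr2 hv.
Qed.
End S.



Section Sig.
Variables (R : realType) (N : nat) (sigma : 'M[R]_N -> 'M[R]_N).
Hypothesis hs : affine_bijection_on sigma.

Lemma sG X : elliptope X -> elliptope (sigma X).
Proof. by case: hs => h _ _ _; apply: h. Qed.
Lemma sinj X Y : elliptope X -> elliptope Y -> sigma X = sigma Y -> X = Y.
Proof. by case: hs => _ h _ _; apply: h. Qed.
Lemma ssurj Y : elliptope Y -> exists2 X, elliptope X & sigma X = Y.
Proof. by case: hs => _ _ h _; apply: h. Qed.
Lemma saff X Y t : elliptope X -> elliptope Y -> 0 <= t <= 1 ->
  sigma (t *: X + (1 - t) *: Y) = t *: sigma X + (1 - t) *: sigma Y.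
Proof. by case: hs => _ _ _ h; apply: h. Qed.

Lemma avg_fix (T : Type) (r : seq T) (F : T -> 'M[R]_N) :
  (0 < size r)%N -> (forall t, elliptope (F t)) -> (forall t, sigma (F t) = F t) ->
  elliptope ((size r)%:R^-1 *: \sum_(t <- r) F t) /\
  sigma ((size r)%:R^-1 *: \sum_(t <- r) F t) = (size r)%:R^-1 *: \sum_(t <- r) F t.
Proof.
move=> + hG hF; elim: r => [//|a r IH _].
case: r IH => [_|b r IH].
  by rewrite /= big_cons big_nil addr0 invr1 scale1r; split.
have [hP hsP] := IH isT.
set n := size (b :: r).
set S := \sum_(t <- b :: r) F t.
have n0 : (0 < n%:R :> R) by rewrite ltr0n.
have -> : (size (a :: b :: r))%:R^-1 *: \sum_(t <- a :: b :: r) F t =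
   (n.+1%:R^-1) *: F a + (1 - n.+1%:R^-1) *: (n%:R^-1 *: S).
  rewrite big_cons scalerDr scalerA; congr (_ + _).
  congr (_ *: _); rewrite -natr1.
  have n1 : n%:R + 1 != 0 :> R by rewrite natr1 pnatr_eq0.
  by field; rewrite n1 (lt0r_neq0 n0).
have t01 : 0 <= (n.+1%:R^-1 : R) <= 1.
  rewrite invr_ge0 ler0n /= invf_le1 ?ltr0n // ler1n //.
split; first by apply: el_comb.
by rewrite saff // hF hsP.
Qed.
End Sig.



Lemma CS (R : realType) (T : Type) (r : seq T) (c y : T -> R) :
  (\sum_(t <- r) c t * y t) ^+ 2 <= (\sum_(t <- r) c t ^+ 2) * (\sum_(t <- r) y t ^+ 2).
Proof.
elim: r => [|a r IH]; first by rewrite !big_nil expr0n /= mul0r.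
rewrite !big_cons.
set S := \sum_(t <- r) c t * y t in IH *.
set C := \sum_(t <- r) c t ^+ 2 in IH *.
set Y := \sum_(t <- r) y t ^+ 2 in IH *.
have hC : 0 <= C by rewrite /C; elim: (r) => [|b s h]; rewrite ?big_nil ?big_cons //; apply: addr_ge0 => //; apply: sqr_ge0.
have hY : 0 <= Y by rewrite /Y; elim: (r) => [|b s h]; rewrite ?big_nil ?big_cons //; apply: addr_ge0 => //; apply: sqr_ge0.
have h1 : (2 * (c a * y a) * S) <= c a ^+ 2 * Y + y a ^+ 2 * C.
  have h2 : (2 * (c a * y a) * S) ^+ 2 <= (c a ^+ 2 * Y + y a ^+ 2 * C) ^+ 2.
    have : (c a ^+ 2 * Y - y a ^+ 2 * C) ^+ 2 >= 0 by apply: sqr_ge0.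
    have : 0 <= c a ^+ 2 * y a ^+ 2 by apply: mulr_ge0; apply: sqr_ge0.
    nra.
  have h3 : 0 <= c a ^+ 2 * Y + y a ^+ 2 * C.
    by apply: addr_ge0; apply: mulr_ge0 => //; apply: sqr_ge0.
  move: h2 h3; set u := 2 * _ * S; set w := _ + _.
  move=> h2 h3; nra.
nra.
Qed.

Lemma sumr1 (R : realType) (T : Type) (r : seq T) : \sum_(t <- r) (1 : R) = (size r)%:R.
Proof. by elim: r => [|a r IH]; rewrite ?big_nil ?big_cons ?IH //= -natr1 addrC. Qed.

Lemma sum_sv (R : realType) (N : nat) (s : seq 'I_N) (a : 'I_N) : uniq s ->
  \sum_(mu <- s) (if a == mu then -1 else 1 : R) = (size s)%:R - 2 * (a \in s)%:R.
Proof.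
elim: s => [|b s IH]; first by rewrite big_nil /= mulr0 subr0.
rewrite /= => /andP[nb us]; rewrite big_cons IH // in_cons -natr1.
case: eqP => [->|_] /=; last by lra.
by rewrite (negbTE nb) /=; lra.
Qed.

Section B.
Variables (R : realType) (N : nat).
Implicit Types (A X Y : 'M[R]_N) (x y v : 'cV[R]_N).
Lemma bfAD A B x y : bf (A + B) x y = bf A x y + bf B x y.
Proof. by rewrite /bf mulmxDr mulmxDl mxE. Qed.
Lemma bfAZ c A x y : bf (c *: A) x y = c * bf A x y.
Proof. by rewrite /bf -scalemxAr -scalemxAl mxE. Qed.
Lemma bfA0 x y : bf (0 : 'M[R]_N) x y = 0.
Proof. by rewrite /bf mulmx0 mul0mx mxE. Qed.
Lemma bf_sum (T : Type) (r : seq T) (F : T -> 'M[R]_N) x y :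
  bf (\sum_(t <- r) F t) x y = \sum_(t <- r) bf (F t) x y.
Proof. by elim: r => [|a r IH]; rewrite ?big_nil ?bfA0 // !big_cons bfAD IH. Qed.

Definition lin v x : R := (x^T *m v) 0 0.
Lemma linE v x : lin v x = \sum_a x a 0 * v a 0.
Proof. by rewrite /lin mxE; apply: eq_bigr => a _; rewrite mxE. Qed.
Lemma bf_r1' v x : bf (v *m v^T) x x = lin v x ^+ 2.
Proof.
rewrite bf_r1 expr2 /lin; congr (_ * _).
have -> : (v^T *m x) = (x^T *m v)^T by rewrite trmx_mul trmxK.
by rewrite mxE.
Qed.
End B.



Section K.
Variables (R : realType) (N : nat) (sigma : 'M[R]_N -> 'M[R]_N).
Hypothesis hs : affine_bijection_on sigma.
Hypothesis h0 : sigma (A0 R N) = A0 R N.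
Hypothesis hmu : forall mu : 'I_N, sigma (Amu R mu) = Amu R mu.

Definition ones : 'cV[R]_N := const_mx 1.
Definition wv (o : option 'I_N) : 'cV[R]_N := if o is Some mu then svec R mu else ones.
Definition Fw o := wv o *m (wv o)^T.

Lemma wv_pm o a : wv o a 0 ^+ 2 = 1.
Proof. by case: o => [mu|]; rewrite /wv /svec !mxE; [case: eqP => _|]; rewrite ?sqrrN expr1n. Qed.

Lemma Fw_el o : elliptope (Fw o).
Proof. by apply: el_r1 => a; apply: wv_pm. Qed.

Lemma Fw_fix o : sigma (Fw o) = Fw o.
Proof.
case: o => [mu|]; first exact: hmu.
have -> : Fw None = A0 R N.
  by apply/matrixP => a b; rewrite r1E /A0 /= !mxE mulr1.
exact: h0.
Qed.

Lemma Kl (v : 'cV[R]_N) : (forall a, v a 0 = 1 \/ v a 0 = -1) ->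
  forall a b, v a 0 = 1 -> v b 0 = 1 -> sigma (v *m v^T) a b = 1.
Proof.
move=> hv a b va vb.
set filt := [seq mu <- index_enum 'I_N | v mu 0 == -1].
set r := None :: map Some filt.
set k : R := (size filt)%:R.
set m : R := (size r)%:R.
set c := fun o : option 'I_N => if o is None then 1 - k else 1.
have ufilt : uniq filt by rewrite filter_uniq // index_enum_uniq.
have memf mu : (mu \in filt) = (v mu 0 == -1) by rewrite mem_filter mem_index_enum andbT.
have n11 : (1 : R) != -1 by apply/eqP; lra.
have rel x : lin v x = \sum_(o <- r) c o * lin (wv o) x.
  have hva d : v d 0 = \sum_(o <- r) c o * wv o d 0.
    rewrite big_cons big_map /= !mxE mulr1.
    under eq_bigr => mu _ do rewrite /svec mxE mul1r.
    rewrite sum_sv // memf -/k.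
    by case: (hv d) => ->; rewrite ?eqxx ?(negbTE n11) /=; lra.
  rewrite linE; under eq_bigr => d _ do rewrite hva big_distrr /=.
  rewrite exchange_big /=; apply: eq_bigr => o _.
  by rewrite linE big_distrr /=; apply: eq_bigr => d _; lra.
have [PG Pfix] := avg_fix hs (r := r) (F := Fw) isT Fw_el Fw_fix.
rewrite -/m in PG Pfix.
set P := m^-1 *: \sum_(o <- r) Fw o in PG Pfix.
have m0 : 0 < m by rewrite /m ltr0n.
have hmem o : o \in r -> forall d, v d 0 = 1 -> wv o d 0 = 1.
  rewrite in_cons => /orP[/eqP -> | /mapP [mu hm ->]] d vd; first by rewrite !mxE.
  rewrite /= /svec mxE; case: eqP => // edm.
  by move: hm; rewrite memf -edm vd (negbTE n11).
have Pab : P a b = 1.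
  rewrite /P mxE summxE (eq_big_seq (fun _ => 1)) ?sumr1 -/m ?mulVf //.
    by apply: lt0r_neq0.
  by move=> o ho; rewrite /Fw r1E !hmem // mulr1.
set K := \sum_(o <- r) c o ^+ 2.
have k0 : 0 <= k by rewrite /k ler0n.
have K0 : 0 < K.
  rewrite /K big_cons big_map /=.
  under eq_bigr => mu _ do rewrite expr1n.
  rewrite sumr1 -/k; nra.
set eps := (m * K)^-1.
have e0 : 0 < eps by rewrite /eps invr_gt0 mulr_gt0.
have eKm : eps * K * m = 1.
  by rewrite /eps; field; rewrite (lt0r_neq0 K0) (lt0r_neq0 m0).
set C := v *m v^T.
have vpm d : v d 0 ^+ 2 = 1 by case: (hv d) => ->; rewrite ?sqrrN expr1n.
have CG : elliptope C by apply: el_r1.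
set Q := (1 + eps) *: P + (- eps) *: C.
have QG : elliptope Q.
  case: PG => PT Ppsd Pd; case: (CG) => CT Cpsd Cd.
  split.
  - have -> : Q^T = (1 + eps) *: P^T + (- eps) *: C^T.
      by apply/matrixP => d e; rewrite !mxE.
    by rewrite PT CT.
  - move=> x; rewrite -/(bf Q x x) /Q bfAD !bfAZ bf_sum /C bf_r1'.
    under eq_bigr => o _ do rewrite /Fw bf_r1'.
    rewrite rel.
    set Y := \sum_(o <- r) lin (wv o) x ^+ 2.
    have hY : 0 <= Y by rewrite /Y; elim: (r) => [|o s h]; rewrite ?big_nil ?big_cons //; apply: addr_ge0 => //; apply: sqr_ge0.
    have hcs := CS r c (fun o => lin (wv o) x); rewrite -/K -/Y in hcs.
    set L := (\sum_(o <- r) c o * lin (wv o) x) ^+ 2 in hcs *.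
    have h1 : eps * L <= m^-1 * Y.
      have -> : m^-1 = eps * K by rewrite /eps; field; rewrite (lt0r_neq0 K0) (lt0r_neq0 m0).
      by rewrite -mulrA ler_wpM2l // ltW.
    have h2 : 0 <= m^-1 * Y by rewrite mulr_ge0 // invr_ge0 ltW.
    nra.
  - have Qe : forall (P0 C0 : 'M[R]_N) d e, ((1+eps) *: P0 + (-eps) *: C0) d e = (1+eps) * P0 d e + (-eps) * C0 d e by move=> *; rewrite !mxE.
    by move=> d; rewrite /Q Qe Pd Cd; lra.
set t := (1 + eps)^-1.
have t0 : 0 < t by rewrite /t invr_gt0; lra.
have t1 : t < 1 by rewrite /t invf_lt1; lra.
have PQ : P = t *: Q + (1 - t) *: C.
  apply/matrixP => d e; rewrite !mxE /t; field; lra.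
have := congr1 (fun M : 'M[R]_N => M a b) Pfix.
rewrite Pab {1}PQ saff //; last by apply/andP; split; lra.
rewrite !mxE.
have := el_bound a b (sG hs QG); have := el_bound a b (sG hs CG).
move=> /andP[_ hc] /andP[_ hq] e1.
nra.
Qed.
End K.



Section C.
Variables (R : realType) (N : nat) (sigma : 'M[R]_N -> 'M[R]_N).
Hypothesis hs : affine_bijection_on sigma.
Hypothesis h0 : sigma (A0 R N) = A0 R N.
Hypothesis hmu : forall mu : 'I_N, sigma (Amu R mu) = Amu R mu.

Lemma combE (al be : R) (A B : 'M[R]_N) a b :
  (al *: A + be *: B) a b = al * A a b + be * B a b.
Proof. by rewrite !mxE. Qed.

Lemma A0G : elliptope (A0 R N).
Proof.
have -> : A0 R N = Fw R (N:=N) None by apply/matrixP => a b; rewrite r1E /A0 /= !mxE mulr1.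
exact: Fw_el.
Qed.

Lemma cut_fix (v : 'cV[R]_N) : (forall a, v a 0 = 1 \/ v a 0 = -1) ->
  sigma (v *m v^T) = v *m v^T.
Proof.
move=> hv.
set C := v *m v^T.
have vpm d : v d 0 ^+ 2 = 1 by case: (hv d) => ->; rewrite ?sqrrN expr1n.
have CG : elliptope C by apply: el_r1.
set Y := sigma C.
have YG : elliptope Y by apply: sG.
have same a b : v a 0 = v b 0 -> Y a b = 1.
  case: (hv a) => va vab.
    by apply: (Kl hs h0 hmu hv); rewrite -?vab.
  have hv' : forall d, (- v) d 0 = 1 \/ (- v) d 0 = -1.
    by move=> d; rewrite mxE; case: (hv d) => ->; rewrite ?opprK; [right|left].
  have -> : Y = sigma ((- v) *m (- v)^T) by rewrite linearN /= mulNmx mulmxN opprK.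
  by apply: (Kl hs h0 hmu hv'); rewrite mxE -?vab va opprK.
have Cab a b : C a b = v a 0 * v b 0 by rewrite r1E.
case: (pickP (fun a => v a 0 == 1)) => [a0 /eqP va0|hno]; last first.
  have allm d : v d 0 = -1.
    by case: (hv d) => // h; move: (hno d); rewrite /= h eqxx.
  by apply/matrixP => a b; rewrite same ?Cab !allm // mulrNN mulr1.
case: (pickP (fun a => v a 0 == -1)) => [b0 /eqP vb0|hno]; last first.
  have allp d : v d 0 = 1.
    by case: (hv d) => // h; move: (hno d); rewrite /= h eqxx.
  by apply/matrixP => a b; rewrite same ?Cab !allp // mulr1.
set c := Y a0 b0.
have ysym := el_sym YG.
have cross a b : v a 0 = 1 -> v b 0 = -1 -> Y a b = c.
  move=> va vb.
  have e1 : Y a0 a = 1 by apply: same; rewrite va0 va.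
  have e2 : Y b0 b = 1 by apply: same; rewrite vb0 vb.
  rewrite -(el_rows _ YG e1) -ysym -(el_rows _ YG e2) ysym //.
set lam := (1 + c) / 2.
have cb := el_bound a0 b0 YG; rewrite -/c in cb.
have l01 : 0 <= lam <= 1 by apply/andP; split; rewrite /lam; case/andP: cb => *; lra.
have Ylam : Y = lam *: A0 R N + (1 - lam) *: C.
  apply/matrixP => a b; rewrite combE Cab /A0 mxE /lam.
  case: (hv a) => va; case: (hv b) => vb; rewrite va vb.
  - by rewrite same ?va ?vb //; lra.
  - by rewrite cross //; lra.
  - by rewrite ysym cross //; lra.
  - by rewrite same ?va ?vb //; lra.
have [X XG sX] := ssurj hs CG.
have comb : lam *: A0 R N + (1 - lam) *: X = C.
  have aG := A0G.
  apply: (sinj hs); first by apply: el_comb.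
    by [].
  by rewrite (saff hs) // h0 sX -Ylam.
have := congr1 (fun M : 'M[R]_N => M a0 b0) comb.
rewrite combE Cab va0 vb0 /A0 mxE.
have := el_bound a0 b0 XG => /andP[xb _] e.
have lam0 : lam = 0 by case/andP: l01 => *; nra.
by rewrite Ylam lam0 scale0r add0r subr0 scale1r.
Qed.
End C.



Section M.
Variables (R : realType) (N : nat).

Definition sg (b : bool) : R := if b then -1 else 1.
Lemma sg2 b : sg b * sg b = 1.
Proof. by case: b; rewrite /sg ?mulrNN mulr1. Qed.

Lemma sgsum (a b : 'I_N) : a != b ->
  \sum_(s : {ffun 'I_N -> bool}) sg (s a) * sg (s b) = 0.
Proof.
move=> nab.
pose fl (s : {ffun 'I_N -> bool}) := [ffun k => if k == a then ~~ s k else s k].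
have flK : involutive fl.
  by move=> s; apply/ffunP => k; rewrite !ffunE; case: eqP => // _; rewrite negbK.
set S := \sum_s _.
have : S = - S.
  rewrite {1}/S (reindex_inj (inv_inj flK)) -sumrN; apply: eq_bigr => s _.
  have nba : (b == a) = false by rewrite eq_sym (negbTE nab).
  rewrite !ffunE eqxx nba /sg.
  by case: (s a); rewrite /= ?mulNr ?mul1r ?opprK.
lra.
Qed.

Definition vs (i j : 'I_N) (e : R) (s : {ffun 'I_N -> bool}) : 'cV[R]_N :=
  \col_k (if k == j then e * sg (s i) else sg (s k)).
Definition mf : R := (size (index_enum {ffun 'I_N -> bool}))%:R.
Definition Mm i j e : 'M[R]_N :=
  mf^-1 *: \sum_(s <- index_enum {ffun 'I_N -> bool}) (vs i j e s *m (vs i j e s)^T).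

Lemma mf_size : (0 < size (index_enum {ffun 'I_N -> bool}))%N.
Proof.
have : [ffun=> false] \in index_enum {ffun 'I_N -> bool} by rewrite mem_index_enum.
by case: (index_enum _).
Qed.
Lemma mf0 : 0 < mf.
Proof. by rewrite /mf ltr0n mf_size. Qed.

Lemma vs_pm i j e s a : e = 1 \/ e = -1 -> vs i j e s a 0 = 1 \/ vs i j e s a 0 = -1.
Proof.
case=> ->; rewrite /vs mxE /sg;
case: eqP => _; case: (s _); rewrite ?mulr1 ?mulrN ?mul1r ?mulN1r ?opprK; by [left|right].
Qed.

Lemma ME i j e a b : e ^+ 2 = 1 ->
  Mm i j e a b = if a == b then 1 else e * ((a == i)%:R * (b == j)%:R + (a == j)%:R * (b == i)%:R).
Proof.
move=> e2.
have key : \sum_(s <- index_enum {ffun 'I_N -> bool}) vs i j e s a 0 * vs i j e s b 0 =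
   mf * (if a == b then 1 else e * ((a == i)%:R * (b == j)%:R + (a == j)%:R * (b == i)%:R)).
  case: (eqVneq a b) => [<-|nab].
    rewrite mulr1 (eq_bigr (fun _ => 1)) ?sumr1 // => s _.
    rewrite /vs !mxE; case: eqP => _; last by rewrite sg2.
    by rewrite mulrACA sg2 mulr1 -expr2 e2.
  case: (eqVneq a j) => [eaj|naj].
    have nbj : b != j by rewrite -eaj eq_sym.
    rewrite eaj ?eqxx (negbTE nbj) mulr0 add0r mul1r.
    under eq_bigr => s _ do rewrite /vs !mxE eqxx (negbTE nbj) -mulrA.
    rewrite -big_distrr /=.
    case: (eqVneq b i) => [ebi|nbi].
      rewrite ebi ?eqxx mulr1 (eq_bigr (fun _ => 1)) => [|s _]; last by rewrite sg2.
      by rewrite sumr1 mulrC.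
    by rewrite sgsum 1?eq_sym // !mulr0.
  case: (eqVneq b j) => [ebj|nbj].
    rewrite ebj ?eqxx mul0r addr0 mulr1.
    under eq_bigr => s _ do rewrite /vs !mxE eqxx (negbTE naj) mulrCA.
    rewrite -big_distrr /=.
    case: (eqVneq a i) => [eai|nai].
      rewrite eai ?eqxx mulr1 (eq_bigr (fun _ => 1)) => [|s _]; last by rewrite sg2.
      by rewrite sumr1 mulrC.
    by rewrite sgsum // !mulr0.
  rewrite ?mulr0 ?mul0r ?addr0 !mulr0.
  under eq_bigr => s _ do rewrite /vs !mxE (negbTE naj) (negbTE nbj).
  by rewrite sgsum.
rewrite /Mm mxE summxE.
under eq_bigr => s _ do rewrite r1E.
rewrite key mulrA mulVf ?mul1r //.
exact: lt0r_neq0 mf0.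
Qed.
End M.

Section F.
Variables (R : realType) (N : nat) (sigma : 'M[R]_N -> 'M[R]_N).
Hypothesis hs : affine_bijection_on sigma.
Hypothesis h0 : sigma (A0 R N) = A0 R N.
Hypothesis hmu : forall mu : 'I_N, sigma (Amu R mu) = Amu R mu.

Lemma M_fix i j (e : R) : e = 1 \/ e = -1 -> elliptope (Mm i j e) /\ sigma (Mm i j e) = Mm i j e.
Proof.
move=> he; rewrite /Mm /mf; apply: (avg_fix hs) => [|s|s].
- exact: mf_size.
- by apply: el_r1 => a; case: (vs_pm i j s a he) => ->; rewrite ?sqrrN expr1n.
- by apply: (cut_fix hs h0 hmu) => a; apply: vs_pm.
Qed.
End F.



Lemma dd (R : realType) (N : nat) (G : 'I_N -> 'I_N -> R) a b :
  \sum_i \sum_j G i j * ((a == i)%:R * (b == j)%:R) = G a b.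
Proof.
rewrite (bigD1 a) //= [X in _ + X]big1 ?addr0 => [|i nia].
  rewrite (bigD1 b) //= [X in _ + X]big1 ?addr0 => [|j njb]; first by rewrite !eqxx mulr1 mulr1.
  by rewrite eq_sym (negbTE njb) mulr0 mulr0.
by apply: big1 => j _; rewrite eq_sym (negbTE nia) mul0r mulr0.
Qed.

Section Fin.
Variables (R : realType) (N : nat) (sigma : 'M[R]_N -> 'M[R]_N).
Hypothesis hs : affine_bijection_on sigma.
Hypothesis h0 : sigma (A0 R N) = A0 R N.
Hypothesis hmu : forall mu : 'I_N, sigma (Amu R mu) = Amu R mu.

Lemma final (i0 : 'I_N) X : elliptope X -> sigma X = X.
Proof.
move=> XG.
pose tt i j : R := (1 + X i j / 2) / 2.
pose T (p : 'I_N * 'I_N) := tt p.1 p.2 *: Mm p.1 p.2 1 + (1 - tt p.1 p.2) *: Mm p.1 p.2 (-1).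
have tt01 i j : 0 <= tt i j <= 1.
  by have := el_bound i j XG => /andP[h1 h2]; apply/andP; split; rewrite /tt; lra.
have TG p : elliptope (T p) /\ sigma (T p) = T p.
  have [G1 F1] := M_fix hs h0 hmu p.1 p.2 (or_introl (erefl (1 : R))).
  have [G2 F2] := M_fix hs h0 hmu p.1 p.2 (or_intror (erefl (-1 : R))).
  split; first by apply: el_comb.
  by rewrite /T (saff hs) // F1 F2.
have spos : (0 < size (index_enum ('I_N * 'I_N)%type))%N.
  have : (i0, i0) \in index_enum ('I_N * 'I_N)%type by rewrite mem_index_enum.
  by case: (index_enum _).
have [YG Yfix] := avg_fix hs (r := index_enum ('I_N * 'I_N)%type) (F := T) spos
   (fun p => (TG p).1) (fun p => (TG p).2).
set m2 : R := (size _)%:R in YG Yfix.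
set Y := m2^-1 *: _ in YG Yfix.
have m20 : 0 < m2 by rewrite /m2 ltr0n.
have Tab p a b : T p a b = if a == b then 1 else
    X p.1 p.2 / 2 * ((a == p.1)%:R * (b == p.2)%:R + (a == p.2)%:R * (b == p.1)%:R).
  rewrite /T combE !ME ?expr1n ?sqrrN ?expr1n //.
  by case: eqP => _; rewrite /tt; field.
have Ye : Y = m2^-1 *: X + (1 - m2^-1) *: 1%:M.
  apply/matrixP => a b; rewrite combE /Y mxE summxE.
  under eq_bigr => p _ do rewrite Tab.
  rewrite mxE; case: (eqVneq a b) => [<-|nab].
    rewrite sumr1 -/m2 (el_diag a XG) mulVf; last exact: lt0r_neq0 m20.
    rewrite /=; lra.
  rewrite -(pair_bigA _ (fun i j => X i j / 2 * ((a == i)%:R * (b == j)%:R + (a == j)%:R * (b == i)%:R))) /=.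
  under eq_bigr => i _ do under eq_bigr => j _ do rewrite mulrDr.
  under eq_bigr => i _ do rewrite big_split /=.
  rewrite big_split /= dd.
  under eq_bigr => i _ do under eq_bigr => j _ do rewrite [_ * (b == i)%:R]mulrC.
  rewrite (dd (fun i j => X i j / 2)) /= (el_sym XG a b); lra.
have [IG Ifix] : elliptope (1%:M : 'M[R]_N) /\ sigma 1%:M = 1%:M.
  have -> : (1%:M : 'M[R]_N) = Mm i0 i0 1.
    apply/matrixP => a b; rewrite ME ?expr1n // mxE.
    case: (eqVneq a b) => [//|nab].
    case ha: (a == i0); case hb: (b == i0); rewrite ?mulr0 ?mul0r ?addr0 //.
    by move: nab; rewrite (eqP ha) (eqP hb) eqxx.
  all: try by rewrite mulr0.
  by apply: (M_fix hs h0 hmu); left.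
have mi : 0 <= m2^-1 <= 1.
  apply/andP; split; first by rewrite invr_ge0 ltW.
  by rewrite invf_le1 // /m2 ler1n.
move: Yfix; rewrite Ye (saff hs) // Ifix => /addIr E.
apply/matrixP => a b.
have := congr1 (fun M : 'M[R]_N => M a b) E; rewrite !mxE.
by apply: mulfI; rewrite invr_neq0 // (lt0r_neq0 m20).
Qed.
End Fin.


Unset Implicit Arguments.
Set Strict Implicit.

Theorem lemma12 (R : realType) (N : nat) (sigma : 'M[R]_N -> 'M[R]_N) :
  affine_bijection_on sigma ->
  sigma (A0 R N) = A0 R N ->
  (forall mu : 'I_N, sigma (Amu R mu) = Amu R mu) ->
  forall X : 'M[R]_N, elliptope X -> sigma X = X.
Proof.
move=> hs h0 hmu X XG.
case: N sigma hs h0 hmu X XG => [|n] sigma hs h0 hmu X XG.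
  by apply/matrixP => -[i hi].
exact: (final hs h0 hmu ord0 XG).
Qed.
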